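(* Let $\alpha=(\alpha_k)_{k\in\mathbb{N}}\in\ell^2$. For natural numbers $a<b$, the quantity $L([a,b])$ is nonincreasing as $a$ increases (with $b$ fixed) and nondecreasing as $b$ increases (with $a$ fixed).
   Context: $\mathbb{N}=\{0,1,2,\dots\}$. For a natural interval $I=[a,b]\cap\mathbb{N}$, write $\|f\|_{2,I}=(\sum_{k\in I}|f(k)|^2)^{1/2}$, $\mu(I)=\sum_{k\in I}|\alpha_k|^2$, and for $f\in\ell^2$ $$l(I,f)=\sum_{k\in I}\sum_{n\in I\setminus\{k\}}\Big|\alpha_k\alpha_n\sum_{j=\min(k,n)+1}^{\max(k,n)}f(j)\Big|^2.$$ Define $L(I)=\big(\sup_{\|f\|_{2,I}\le1} l(I,f)/\mu(I)\big)^{1/2}$ (supremum over $f\in\ell^2$ supported in $I$), and $L(I)=0$ if $\alpha_k=0$ for all $k\in I$. *)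

(* Defs.v *)
From Stdlib Require Import Reals ClassicalEpsilon.
From Coquelicot Require Import Coquelicot.
Open Scope R_scope.

(* The natural interval I = [a,b] ∩ N is represented by its endpoints a b. *)

Definition norm2_sq (a b : nat) (f : nat -> C) : R :=
  sum_n_m (fun k => (Cmod (f k)) ^ 2) a b.

Definition mu (alpha : nat -> C) (a b : nat) : R :=
  sum_n_m (fun k => (Cmod (alpha k)) ^ 2) a b.

Definition partial_sum (f : nat -> C) (k n : nat) : C :=
  sum_n_m f (S (Nat.min k n)) (Nat.max k n).

Definition l_fun (alpha : nat -> C) (a b : nat) (f : nat -> C) : R :=
  sum_n_m (fun k =>
    sum_n_m (fun n =>
      if Nat.eqb n k then 0
      else (Cmod (alpha k * alpha n * partial_sum f k n)) ^ 2) a b) a b.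

Definition supported_in (a b : nat) (f : nat -> C) : Prop :=
  forall k, (k < a \/ b < k)%nat -> f k = 0%C.

Definition ratio_set (alpha : nat -> C) (a b : nat) : R -> Prop :=
  fun x => exists f : nat -> C,
    supported_in a b f /\ norm2_sq a b f <= 1 /\
    x = l_fun alpha a b f / mu alpha a b.

(* L(I): 0 if alpha vanishes on I, otherwise the square root of the supremum
   (the supremum is finite since I is finite). *)
Definition L (alpha : nat -> C) (a b : nat) : R :=
  match excluded_middle_informative
          (forall k, (a <= k <= b)%nat -> alpha k = 0%C) with
  | left _ => 0
  | right _ => sqrt (real (Lub_Rbar (ratio_set alpha a b)))
  end.

Definition in_l2 (alpha : nat -> C) : Prop :=
  ex_series (fun k => (Cmod (alpha k)) ^ 2).

(* Main.v *)
Require Import Defs.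
From Stdlib Require Import Reals Lra Lia Arith ClassicalEpsilon Classical.
From Coquelicot Require Import Coquelicot.
Open Scope R_scope.

Lemma sR_plus (u v : nat -> R) p q :
  sum_n_m (fun k => u k + v k) p q = sum_n_m u p q + sum_n_m v p q.
Proof. exact (sum_n_m_plus u v p q). Qed.

Lemma sR_scal (c : R) (u : nat -> R) p q :
  sum_n_m (fun k => c * u k) p q = c * sum_n_m u p q.
Proof. exact (sum_n_m_mult_l c u p q). Qed.

Lemma sR_ext (u v : nat -> R) p q :
  (forall n, u n = v n) -> sum_n_m u p q = sum_n_m v p q.
Proof. intros; apply sum_n_m_ext; auto. Qed.

Lemma sR_ext_loc (u v : nat -> R) p q :
  (forall n, (p <= n <= q)%nat -> u n = v n) -> sum_n_m u p q = sum_n_m v p q.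
Proof. intros; apply sum_n_m_ext_loc; auto. Qed.

Lemma sR_nonneg (g : nat -> R) p q :
  (forall k, (p <= k <= q)%nat -> 0 <= g k) -> 0 <= sum_n_m g p q.
Proof.
  intros H. induction q.
  - destruct p. rewrite sum_n_n. apply H; lia.
    rewrite sum_n_m_zero by lia. apply Rle_refl.
  - destruct (le_lt_dec p (S q)).
    + destruct (Nat.eq_dec p (S q)). subst. rewrite sum_n_n. apply H; lia.
      rewrite sum_n_Sm by lia. change (plus ?a ?b) with (a + b).
      assert (0 <= g (S q)) by (apply H; lia).
      assert (0 <= sum_n_m g p q) by (apply IHq; intros; apply H; lia). lra.
    + rewrite sum_n_m_zero by lia. apply Rle_refl.
Qed.

Lemma sR_sub_le (g : nat -> R) a b p q :
  (forall k, (a <= k <= b)%nat -> 0 <= g k) -> (a <= p)%nat -> (q <= b)%nat ->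
  sum_n_m g p q <= sum_n_m g a b.
Proof.
  intros H Hp Hq.
  destruct (le_lt_dec p q).
  2:{ rewrite (sum_n_m_zero g p q) by lia. apply sR_nonneg; auto. }
  rewrite (sum_n_m_Chasles g a q b) by lia.
  change (plus ?x ?y) with (x + y).
  assert (0 <= sum_n_m g (S q) b) by (apply sR_nonneg; intros; apply H; lia).
  destruct (Nat.eq_dec a p). subst. lra.
  rewrite (sum_n_m_Chasles g a (pred p) q) by lia.
  change (plus ?x ?y) with (x + y).
  replace (S (pred p)) with p by lia.
  assert (0 <= sum_n_m g a (pred p)) by (apply sR_nonneg; intros; apply H; lia).
  lra.
Qed.

Lemma variance (x g : nat -> R) p q :
  sum_n_m (fun k => sum_n_m (fun n => x k * x n * (g n - g k)^2) p q) p q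
  <= 2 * sum_n_m x p q * sum_n_m (fun n => x n * g n ^ 2) p q.
Proof.
  set (P := sum_n_m (fun n => x n * g n ^ 2) p q).
  set (Q := sum_n_m (fun n => x n * g n) p q).
  set (M := sum_n_m x p q).
  assert (E : sum_n_m (fun k => sum_n_m (fun n => x k * x n * (g n - g k)^2) p q) p q
     = sum_n_m (fun k => P * x k + M * (x k * g k ^ 2) + (-2 * Q) * (x k * g k)) p q).
  { apply sR_ext; intros k.
    rewrite (sR_ext (fun n => x k * x n * (g n - g k)^2) (fun n => (x k * (x n * g n ^ 2) + (x k * g k ^2) * x n)
         + (-2 * x k * g k) * (x n * g n))) by (intros; ring).
    rewrite sR_plus, sR_plus, !sR_scal. fold P Q M. ring. }
  rewrite E, !sR_plus, !sR_scal. fold P Q M.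
  assert (0 <= Q * Q) by nra. nra.
Qed.

Definition xa (alpha : nat -> C) k := Cmod (alpha k) ^ 2.

Lemma Cmod2 (z : C) : Cmod z ^ 2 = fst z ^ 2 + snd z ^ 2.
Proof.
  unfold Cmod. rewrite pow2_sqrt; [ring|]. nra.
Qed.

Lemma variance_C (x : nat -> R) (F : nat -> C) p q :
  sum_n_m (fun k => sum_n_m (fun n => x k * x n * Cmod (F n - F k)%C ^ 2) p q) p q
  <= 2 * sum_n_m x p q * sum_n_m (fun n => x n * Cmod (F n) ^ 2) p q.
Proof.
  rewrite (sR_ext _ (fun k => sum_n_m (fun n => x k * x n * (fst (F n) - fst (F k))^2) p q
     + sum_n_m (fun n => x k * x n * (snd (F n) - snd (F k))^2) p q)).
  2:{ intros k. rewrite <- sR_plus. apply sR_ext; intros n. rewrite Cmod2.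
      unfold Cminus, Cplus, Copp; simpl. ring. }
  rewrite sR_plus.
  rewrite (sR_ext (fun n => x n * Cmod (F n) ^ 2) (fun n => x n * fst (F n) ^ 2 + x n * snd (F n) ^ 2)).
  2:{ intros n. rewrite Cmod2. ring. }
  rewrite sR_plus.
  pose proof (variance x (fun n => fst (F n)) p q).
  pose proof (variance x (fun n => snd (F n)) p q). simpl in *. lra.
Qed.

Lemma term_eq alpha f k n :
  (if Nat.eqb n k then 0 else Cmod (alpha k * alpha n * partial_sum f k n)%C ^ 2)
  = xa alpha k * xa alpha n * Cmod (partial_sum f k n) ^ 2.
Proof.
  destruct (Nat.eqb_spec n k).
  - subst. unfold partial_sum. rewrite Nat.min_id, Nat.max_id.
    rewrite sum_n_m_zero by lia. rewrite (Cmod_0 : Cmod (@zero C_AbelianMonoid) = 0). ring.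
  - unfold xa. rewrite !Cmod_mult. ring.
Qed.

Lemma lfun_eq alpha a b f :
  l_fun alpha a b f = sum_n_m (fun k => sum_n_m (fun n =>
     xa alpha k * xa alpha n * Cmod (partial_sum f k n) ^ 2) a b) a b.
Proof.
  unfold l_fun. apply sR_ext; intros k. apply sR_ext; intros n. apply term_eq.
Qed.

Lemma Cl1 (A B : C) : ((A + B) - A = B)%C.
Proof. destruct A, B; unfold Cminus, Cplus, Copp; simpl; f_equal; ring. Qed.
Lemma Cl2 (A B : C) : (A - (A + B) = - B)%C.
Proof. destruct A, B; unfold Cminus, Cplus, Copp; simpl; f_equal; ring. Qed.
Lemma Cl3 (A B : C) : (B - (A + B) = - A)%C.
Proof. destruct A, B; unfold Cminus, Cplus, Copp; simpl; f_equal; ring. Qed.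
Lemma Cl4 (A B : C) : ((A + B) - B = A)%C.
Proof. destruct A, B; unfold Cminus, Cplus, Copp; simpl; f_equal; ring. Qed.

Lemma ps_left f a k n : (S a <= k)%nat -> (S a <= n)%nat ->
  Cmod (partial_sum f k n) =
  Cmod (sum_n_m f (S a) n - sum_n_m f (S a) k)%C.
Proof.
  intros Hk Hn. unfold partial_sum.
  destruct (le_lt_dec k n).
  - rewrite Nat.min_l, Nat.max_r by lia.
    rewrite (sum_n_m_Chasles f (S a) k n) by lia.
    change (plus ?x ?y) with (Cplus x y). rewrite Cl1. reflexivity.
  - rewrite Nat.min_r, Nat.max_l by lia.
    rewrite (sum_n_m_Chasles f (S a) n k) by lia.
    change (plus ?x ?y) with (Cplus x y). rewrite Cl2, Cmod_opp. reflexivity.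
Qed.

Lemma ps_right f b k n : (k <= b)%nat -> (n <= b)%nat ->
  Cmod (partial_sum f k n) =
  Cmod (sum_n_m f (S n) (S b) - sum_n_m f (S k) (S b))%C.
Proof.
  intros Hk Hn. unfold partial_sum.
  destruct (le_lt_dec k n).
  - rewrite Nat.min_l, Nat.max_r by lia.
    rewrite (sum_n_m_Chasles f (S k) n (S b)) by lia.
    change (plus ?x ?y) with (Cplus x y). rewrite Cl3, Cmod_opp. reflexivity.
  - rewrite Nat.min_r, Nat.max_l by lia.
    rewrite (sum_n_m_Chasles f (S n) k (S b)) by lia.
    change (plus ?x ?y) with (Cplus x y). rewrite Cl4. reflexivity.
Qed.

Ltac rring := match goal with |- ?l = ?r => change (@eq R l r) end; ring.

Definition DS (T : nat -> nat -> R) a b :=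
  sum_n_m (fun k => sum_n_m (fun n => T k n) a b) a b.

Lemma dsum_left T a b : (a <= b)%nat ->
  DS T a b = DS T (S a) b + T a a + sum_n_m (fun n => T a n) (S a) b
             + sum_n_m (fun k => T k a) (S a) b.
Proof.
  intros H. unfold DS. rewrite (sum_Sn_m _ a b H).
  change (plus ?x ?y) with (x + y).
  rewrite (sum_Sn_m (fun n => T a n) a b H).
  change (plus ?x ?y) with (x + y).
  rewrite (sR_ext_loc (fun k => sum_n_m (fun n => T k n) a b) (fun k => T k a + sum_n_m (fun n => T k n) (S a) b)).
  2:{ intros k _. exact (sum_Sn_m _ a b H). }
  rewrite sR_plus. rring.
Qed.

Lemma dsum_right T a b : (a <= S b)%nat ->
  DS T a (S b) = DS T a b + T (S b) (S b) + sum_n_m (fun n => T (S b) n) a b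
             + sum_n_m (fun k => T k (S b)) a b.
Proof.
  intros H. unfold DS. rewrite (sum_n_Sm _ a b H).
  change (plus ?x ?y) with (x + y).
  rewrite (sum_n_Sm (fun n => T (S b) n) a b H).
  change (plus ?x ?y) with (x + y).
  rewrite (sR_ext_loc (fun k => sum_n_m (fun n => T k n) a (S b)) (fun k => sum_n_m (fun n => T k n) a b + T k (S b))).
  2:{ intros k _. exact (sum_n_Sm _ a b H). }
  rewrite sR_plus. rring.
Qed.

Lemma ps_diag f k : Cmod (partial_sum f k k) = 0.
Proof.
  unfold partial_sum. rewrite Nat.min_id, Nat.max_id.
  rewrite sum_n_m_zero by lia. exact Cmod_0.
Qed.

Lemma ratio_le lI mI x P : 0 < mI -> 0 <= x -> lI <= 2*mI*P ->
  lI/mI <= (lI + 2*x*P)/(mI + x).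
Proof.
  intros H1 H2 H3.
  assert (E : (lI + 2*x*P)/(mI + x) - lI/mI = (x * (2*mI*P - lI)) / (mI * (mI + x)))
    by (field; lra).
  assert (0 <= (x * (2*mI*P - lI)) / (mI * (mI + x))).
  { unfold Rdiv. apply Rmult_le_pos. apply Rmult_le_pos; lra.
    apply Rlt_le, Rinv_0_lt_compat. nra. }
  lra.
Qed.

Lemma xa_nonneg alpha k : 0 <= xa alpha k.
Proof. unfold xa. pose proof (Cmod_ge_0 (alpha k)). nra. Qed.

Lemma mu_pos_le alpha a b : 0 < mu alpha a b -> (a <= b)%nat.
Proof.
  intros H. destruct (le_lt_dec a b); auto.
  unfold mu in H. rewrite sum_n_m_zero in H by lia. change (0 < 0) in H. lra.
Qed.

Lemma step_left alpha f a b : 0 < mu alpha (S a) b ->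
  l_fun alpha (S a) b f / mu alpha (S a) b <= l_fun alpha a b f / mu alpha a b.
Proof.
  intros Hm. pose proof (mu_pos_le _ _ _ Hm) as Hab.
  set (P := sum_n_m (fun n => xa alpha n * Cmod (sum_n_m f (S a) n) ^ 2) (S a) b).
  assert (EJ : l_fun alpha a b f = l_fun alpha (S a) b f + 2 * xa alpha a * P).
  { rewrite !lfun_eq. fold (DS (fun k n => xa alpha k * xa alpha n * Cmod (partial_sum f k n) ^ 2) a b).
    fold (DS (fun k n => xa alpha k * xa alpha n * Cmod (partial_sum f k n) ^ 2) (S a) b).
    rewrite dsum_left by lia. cbv beta. rewrite ps_diag.
    rewrite (sR_ext_loc (fun n => xa alpha a * xa alpha n * Cmod (partial_sum f a n) ^ 2) (fun n => xa alpha a * (xa alpha n * Cmod (sum_n_m f (S a) n) ^ 2))).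
    2:{ intros n Hn. unfold partial_sum. rewrite Nat.min_l, Nat.max_r by lia. ring. }
    rewrite (sR_ext_loc (fun k => xa alpha k * xa alpha a * Cmod (partial_sum f k a) ^ 2) (fun n => xa alpha a * (xa alpha n * Cmod (sum_n_m f (S a) n) ^ 2))).
    2:{ intros n Hn. unfold partial_sum. rewrite Nat.min_r, Nat.max_l by lia. ring. }
    rewrite sR_scal. fold P. rring. }
  assert (EM : mu alpha a b = mu alpha (S a) b + xa alpha a).
  { unfold mu. rewrite (sum_Sn_m _ a b) by lia. change (plus ?x ?y) with (x + y).
    unfold xa. ring. }
  assert (HI : l_fun alpha (S a) b f <= 2 * mu alpha (S a) b * P).
  { rewrite lfun_eq.
    rewrite (sR_ext_loc _ (fun k => sum_n_m (fun n => xa alpha k * xa alpha n *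
        Cmod (sum_n_m f (S a) n - sum_n_m f (S a) k)%C ^ 2) (S a) b)).
    2:{ intros k Hk. apply sR_ext_loc. intros n Hn. rewrite (ps_left f a k n) by lia. reflexivity. }
    apply (variance_C (xa alpha) (fun n => sum_n_m f (S a) n)). }
  rewrite EJ, EM. apply ratio_le; auto. apply xa_nonneg.
Qed.

Lemma step_right alpha f a b : 0 < mu alpha a b ->
  l_fun alpha a b f / mu alpha a b <= l_fun alpha a (S b) f / mu alpha a (S b).
Proof.
  intros Hm. pose proof (mu_pos_le _ _ _ Hm) as Hab.
  set (P := sum_n_m (fun n => xa alpha n * Cmod (sum_n_m f (S n) (S b)) ^ 2) a b).
  assert (EJ : l_fun alpha a (S b) f = l_fun alpha a b f + 2 * xa alpha (S b) * P).
  { rewrite !lfun_eq. fold (DS (fun k n => xa alpha k * xa alpha n * Cmod (partial_sum f k n) ^ 2) a b).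
    fold (DS (fun k n => xa alpha k * xa alpha n * Cmod (partial_sum f k n) ^ 2) a (S b)).
    rewrite dsum_right by lia. cbv beta. rewrite ps_diag.
    rewrite (sR_ext_loc (fun n => xa alpha (S b) * xa alpha n * Cmod (partial_sum f (S b) n) ^ 2) (fun n => xa alpha (S b) * (xa alpha n * Cmod (sum_n_m f (S n) (S b)) ^ 2))).
    2:{ intros n Hn. unfold partial_sum. rewrite Nat.min_r, Nat.max_l by lia. ring. }
    rewrite (sR_ext_loc (fun k => xa alpha k * xa alpha (S b) * Cmod (partial_sum f k (S b)) ^ 2) (fun n => xa alpha (S b) * (xa alpha n * Cmod (sum_n_m f (S n) (S b)) ^ 2))).
    2:{ intros n Hn. unfold partial_sum. rewrite Nat.min_l, Nat.max_r by lia. ring. }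
    rewrite sR_scal. fold P. rring. }
  assert (EM : mu alpha a (S b) = mu alpha a b + xa alpha (S b)).
  { unfold mu. rewrite (sum_n_Sm _ a b) by lia. change (plus ?x ?y) with (x + y).
    unfold xa. ring. }
  assert (HI : l_fun alpha a b f <= 2 * mu alpha a b * P).
  { rewrite lfun_eq.
    rewrite (sR_ext_loc _ (fun k => sum_n_m (fun n => xa alpha k * xa alpha n *
        Cmod (sum_n_m f (S n) (S b) - sum_n_m f (S k) (S b))%C ^ 2) a b)).
    2:{ intros k Hk. apply sR_ext_loc. intros n Hn. rewrite (ps_right f b k n) by lia. reflexivity. }
    apply (variance_C (xa alpha) (fun n => sum_n_m f (S n) (S b))). }
  rewrite EJ, EM. apply ratio_le; auto. apply xa_nonneg.
Qed.

Lemma sR_le_loc (u v : nat -> R) p q :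
  (forall k, (p <= k <= q)%nat -> u k <= v k) -> sum_n_m u p q <= sum_n_m v p q.
Proof.
  intros H.
  assert (E : sum_n_m v p q = sum_n_m u p q + sum_n_m (fun k => v k - u k) p q).
  { rewrite <- sR_plus. apply sR_ext_loc. intros. ring. }
  assert (0 <= sum_n_m (fun k => v k - u k) p q).
  { apply sR_nonneg. intros k Hk. specialize (H k Hk). lra. }
  rewrite E. lra.
Qed.

Lemma ps_bound f a b k n : (a <= k <= b)%nat -> (a <= n <= b)%nat ->
  norm2_sq a b f <= 1 -> Cmod (partial_sum f k n) <= INR (S b - a) + 1.
Proof.
  intros Hk Hn Hf. unfold partial_sum.
  eapply Rle_trans. exact (@norm_sum_n_m C_AbsRing C_NormedModule f _ _).
  eapply Rle_trans. apply (sum_n_m_le _ (fun j => 1 + Cmod (f j) ^ 2)).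
  { intros j. change (norm (f j)) with (Cmod (f j)). pose proof (Cmod_ge_0 (f j)). nra. }
  eapply Rle_trans. apply (sR_sub_le _ a b).
  { intros j _. pose proof (Cmod_ge_0 (f j)). nra. }
  lia. lia.
  rewrite sR_plus, sum_n_m_const. unfold norm2_sq in Hf. 
  change (INR (S b - a) * 1 + sum_n_m (fun j => Cmod (f j) ^ 2) a b <= INR (S b - a) + 1).
  lra.
Qed.

Lemma ratio_bound (alpha : nat -> C) a b : 0 < mu alpha a b ->
  exists M, forall y, ratio_set alpha a b y -> y <= M.
Proof.
  intros Hm. set (K := INR (S b - a) + 1).
  exists (DS (fun k n => xa alpha k * xa alpha n * K ^ 2) a b / mu alpha a b).
  intros y [f [Hs [Hn ->]]].
  unfold Rdiv. apply Rmult_le_compat_r. apply Rlt_le, Rinv_0_lt_compat; auto.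
  rewrite lfun_eq. unfold DS. apply sR_le_loc. intros k Hk. apply sR_le_loc. intros n Hn'.
  apply Rmult_le_compat_l.
  { apply Rmult_le_pos; apply xa_nonneg. }
  pose proof (ps_bound f a b k n Hk Hn' Hn). pose proof (Cmod_ge_0 (partial_sum f k n)).
  fold K in H. nra.
Qed.

Lemma lub_props (E : R -> Prop) M y0 : E y0 -> (forall y, E y -> y <= M) ->
  (forall y, E y -> y <= real (Lub_Rbar E)) /\
  (forall z, (forall y, E y -> y <= z) -> real (Lub_Rbar E) <= z).
Proof.
  intros H0 HM. destruct (Lub_Rbar_correct E) as [Hub Hl].
  destruct (Lub_Rbar E) as [r| |] eqn:Heq.
  - simpl. split.
    + intros y Hy. exact (Hub y Hy).
    + intros z Hz. exact (Hl (Finite z) Hz).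
  - exfalso. exact (Hl (Finite M) HM).
  - exfalso. exact (Hub y0 H0).
Qed.

Lemma norm_zero p q : norm2_sq p q (fun _ => 0%C) = 0.
Proof.
  unfold norm2_sq. rewrite (sR_ext _ (fun _ => 0)).
  rewrite sum_n_m_const. ring.
  intros. rewrite Cmod_0. ring.
Qed.

Lemma mu_pos (alpha : nat -> C) a b k : (a <= k <= b)%nat -> alpha k <> 0%C -> 0 < mu alpha a b.
Proof.
  intros Hk Ha. apply Rlt_le_trans with (xa alpha k).
  - unfold xa. pose proof (proj1 (Cmod_gt_0 (alpha k)) Ha). nra.
  - unfold mu. replace (xa alpha k) with (sum_n_m (fun j => Cmod (alpha j) ^ 2) k k) by (rewrite sum_n_n; reflexivity).
    apply sR_sub_le; try lia. intros. apply xa_nonneg.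
Qed.

Lemma L_mono (alpha : nat -> C) a b c d : (a <= c)%nat -> (d <= b)%nat ->
  (forall f, supported_in c d f -> norm2_sq a b f = norm2_sq c d f) ->
  (0 < mu alpha c d -> forall f, l_fun alpha c d f / mu alpha c d <= l_fun alpha a b f / mu alpha a b) ->
  L alpha c d <= L alpha a b.
Proof.
  intros Hac Hdb Hnorm Hstep. unfold L.
  destruct (excluded_middle_informative (forall k, (c <= k <= d)%nat -> alpha k = 0%C)) as [Hz|Hnz].
  { destruct (excluded_middle_informative (forall k, (a <= k <= b)%nat -> alpha k = 0%C)).
    lra. apply sqrt_pos. }
  destruct (excluded_middle_informative (forall k, (a <= k <= b)%nat -> alpha k = 0%C)) as [Hz'|_].
  { exfalso. apply Hnz. intros k Hk. apply Hz'. lia. }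
  apply sqrt_le_1_alt.
  destruct (Classical_Prop.classic (exists k, (c <= k <= d)%nat /\ alpha k <> 0%C)) as [[k [Hk Hak]]|Hn].
  2:{ exfalso. apply Hnz. intros k Hk. destruct (Classical_Prop.classic (alpha k = 0%C)); auto.
      exfalso. apply Hn. exists k. auto. }
  assert (HmI : 0 < mu alpha c d) by (apply (mu_pos _ _ _ k); auto).
  assert (HmJ : 0 < mu alpha a b) by (apply (mu_pos _ _ _ k); auto; lia).
  assert (Hsupp : forall f, supported_in c d f -> supported_in a b f).
  { intros f Hf j Hj. apply Hf. lia. }
  assert (Z : forall p q, supported_in p q (fun _ => 0%C)) by (intros p q j _; reflexivity).
  assert (EJ0 : ratio_set alpha a b (l_fun alpha a b (fun _ => 0%C) / mu alpha a b)).
  { exists (fun _ => 0%C). split; auto. split; auto. rewrite norm_zero. lra. }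
  assert (EI0 : ratio_set alpha c d (l_fun alpha c d (fun _ => 0%C) / mu alpha c d)).
  { exists (fun _ => 0%C). split; auto. split; auto. rewrite norm_zero. lra. }
  destruct (ratio_bound _ _ _ HmJ) as [M HM].
  destruct (lub_props _ _ _ EJ0 HM) as [HJub _].
  assert (HIb : forall y, ratio_set alpha c d y -> y <= real (Lub_Rbar (ratio_set alpha a b))).
  { intros y [f [Hs [Hn ->]]]. eapply Rle_trans. apply (Hstep HmI f).
    apply HJub. exists f. split; auto. split; auto. rewrite Hnorm; auto. }
  destruct (lub_props _ _ _ EI0 HIb) as [_ HIl].
  apply HIl. exact HIb.
Qed.

Lemma L_left (alpha : nat -> C) a b : L alpha (S a) b <= L alpha a b.
Proof.
  apply L_mono; try lia.
  - intros f Hf. unfold norm2_sq. destruct (le_lt_dec a b).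
    + rewrite (sum_Sn_m _ a b) by lia. rewrite (Hf a) by lia.
      change (plus ?x ?y) with (x + y). rewrite Cmod_0. rring.
    + rewrite !sum_n_m_zero by lia. reflexivity.
  - intros Hm f. apply step_left; auto.
Qed.

Lemma L_right (alpha : nat -> C) a b : L alpha a b <= L alpha a (S b).
Proof.
  apply L_mono; try lia.
  - intros f Hf. unfold norm2_sq. destruct (le_lt_dec a (S b)).
    + rewrite (sum_n_Sm _ a b) by lia. rewrite (Hf (S b)) by lia.
      change (plus ?x ?y) with (x + y). rewrite Cmod_0. rring.
    + rewrite !sum_n_m_zero by lia. reflexivity.
  - intros Hm f. apply step_right; auto.
Qed.

Theorem lemma3p2 (alpha : nat -> C) (Halpha : in_l2 alpha) :
  (forall a a' b : nat, (a <= a')%nat -> (a' < b)%nat ->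
     L alpha a' b <= L alpha a b) /\
  (forall a b b' : nat, (a < b)%nat -> (b <= b')%nat ->
     L alpha a b <= L alpha a b').
Proof.
  split.
  - intros a a' b H _. replace a' with (a + (a' - a))%nat by lia.
    generalize (a' - a)%nat. intros d. induction d.
    + rewrite Nat.add_0_r. lra.
    + replace (a + S d)%nat with (S (a + d)) by lia.
      eapply Rle_trans. apply L_left. exact IHd.
  - intros a b b' _ H. replace b' with (b + (b' - b))%nat by lia.
    generalize (b' - b)%nat. intros d. induction d.
    + rewrite Nat.add_0_r. lra.
    + replace (b + S d)%nat with (S (b + d)) by lia.
      eapply Rle_trans. exact IHd. apply L_right.
Qed.
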